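(* Let $G$ be a graph and let $K$ be a cut-set of the complement $\overline{G}$. Then for every induced subgraph $H$ of $G$, \[\chi(G) \leq \frac{1}{2} \left(\omega(G) + \Delta(G) + 1 \right) + \frac{4\chi(G[K]) + 3\chi(H \smallsetminus K) - |H \smallsetminus K|}{4}.\]
   Context: All graphs are finite and simple with non-empty vertex set. $|G|$ denotes the number of vertices, $\chi$ the chromatic number, $\omega$ the clique number, $\Delta$ the maximum degree. $\overline{G}$ is the complement of $G$. A cut-set of $\overline{G}$ is a set $K$ of vertices such that $\overline{G} - K$ is disconnected. $G[K]$ is the subgraph of $G$ induced by $K$, and $H \smallsetminus K$ is the subgraph of $G$ induced by $V(H)\setminus K$. By convention a graph on the empty vertex set has chromatic number $0$ and $0$ vertices. *)

(* Defs.v *)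
(* A simple graph on a finite vertex type T is a
   symmetric irreflexive boolean relation e : rel T (vertex set = T). *)
From mathcomp Require Import all_boot all_order.
Set Implicit Arguments. Unset Strict Implicit. Unset Printing Implicit Defensive.

Section Graphs.
Variables (T : finType) (e : rel T).

Definition simple_graph : Prop := [/\ symmetric e, irreflexive e & 0 < #|T|].

(* c is a proper colouring of the induced subgraph G[A] with colours in {0..k-1}
   (the test x != y is redundant for an irreflexive e) *)
Definition proper_coloring (A : {set T}) (k : nat) (c : T -> nat) : bool :=
  [forall x in A, (c x < k) &&
     [forall y in A, ((x != y) && e x y) ==> (c x != c y)]].

Definition colorable (A : {set T}) (k : nat) : bool :=
  [exists c : {ffun T -> 'I_k.+1}, proper_coloring A k (fun x => nat_of_ord (c x))].

Lemma colorable_ex (A : {set T}) : exists k, colorable A k.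
Proof.
exists #|T|; apply/existsP.
have H (x : T) : (enum_rank x : nat) < #|T|.+1 := leqW (ltn_ord (enum_rank x)).
exists [ffun x => inord (enum_rank x) : 'I_#|T|.+1].
apply/forallP => x; apply/implyP => _; rewrite ffunE inordK //= ltn_ord /=.
apply/forallP => y; apply/implyP => _; apply/implyP => /andP [nxy _].
rewrite ffunE inordK //; apply/negP => /eqP /val_inj /enum_rank_inj eq_xy.
by rewrite eq_xy eqxx in nxy.
Qed.

(* chromatic number of the induced subgraph G[A]; equals 0 when A is empty *)
Definition chi (A : {set T}) : nat := ex_minn (colorable_ex A).

Definition clique (S : {set T}) : bool :=
  [forall x in S, forall y in S, (x != y) ==> e x y].

Definition omega : nat := \max_(S : {set T} | clique S) #|S|.

Definition Delta : nat := \max_(x : T) #|[set y | e x y]|.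

Definition compl_rel : rel T := fun x y => (x != y) && ~~ e x y.

(* K is a cut-set of the complement of G: complement(G) - K is disconnected,
   i.e. it has two vertices joined by no path inside V \ K *)
Definition compl_cutset (K : {set T}) : Prop :=
  let r := fun x y => [&& x \notin K, y \notin K & compl_rel x y] in
  exists u v, [/\ u \notin K, v \notin K & ~~ connect r u v].

End Graphs.

(* Main.v *)
Require Import Defs.
From mathcomp Require Import all_boot all_order all_algebra.
From mathcomp Require Import zify.
Set Implicit Arguments. Unset Strict Implicit. Unset Printing Implicit Defensive.

Section Basic.
Variables (T : finType) (e : rel T).
Hypotheses (esym : symmetric e) (eirr : irreflexive e).

Definition prop (X : {set T}) (c : T -> nat) :=
  forall x y, x \in X -> y \in X -> e x y -> c x != c y.

Lemma chi_le (X : {set T}) k (c : T -> nat) :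
  (forall x, x \in X -> c x < k) -> prop X c -> chi e X <= k.
Proof.
move=> ck pc.
have col: colorable e X k.
  apply/existsP; exists [ffun x => inord (c x) : 'I_k.+1].
  apply/forallP => x; apply/implyP => xX.
  rewrite ffunE inordK; last by apply: ltnW; apply: ck.
  rewrite ck //=; apply/forallP => y; apply/implyP => yX.
  apply/implyP => /andP[_ exy]; rewrite ffunE inordK; last by apply: ltnW; apply: ck.
  exact: pc.
rewrite /chi; case: ex_minnP => m _ H; exact: H.
Qed.

Lemma chi_ex (X : {set T}) : exists c : T -> nat,
  (forall x, x \in X -> c x < chi e X) /\ prop X c.
Proof.
rewrite /chi; case: ex_minnP => m /existsP[f /forallP pf] _.
exists (fun x => nat_of_ord (f x)); split.
  by move=> x xX; have /andP[] := implyP (pf x) xX.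
move=> x y xX yX exy; have /andP[_ /forallP q] := implyP (pf x) xX.
have := implyP (q y) yX; rewrite exy andbT => /implyP; apply.
by apply/negP => /eqP xy; move: exy; rewrite xy eirr.
Qed.

Lemma chi_img (X : {set T}) (m : nat) (c : T -> 'I_m) :
  (forall x y, x \in X -> y \in X -> e x y -> c x != c y) ->
  chi e X <= #|[set c x | x in X]|.
Proof.
move=> pc; set s := enum [set c x | x in X].
apply: (@chi_le _ _ (fun x => index (c x) s)).
  move=> x xX; rewrite cardE index_mem mem_enum; apply/imsetP; by exists x.
move=> x y xX yX exy; apply/negP => /eqP h.
have hx : c x \in s by rewrite mem_enum; apply/imsetP; exists x.
have hy : c y \in s by rewrite mem_enum; apply/imsetP; exists y.
have := pc x y xX yX exy.
by rewrite -(nth_index (c x) hx) h (nth_index (c x) hy) eqxx.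
Qed.

Lemma chi0 : chi e set0 = 0.
Proof. apply/eqP; rewrite -leqn0; by apply: (@chi_le _ _ (fun _ => 0)) => [x|x y]; rewrite inE. Qed.

Lemma chi_pos (X : {set T}) x : x \in X -> 0 < chi e X.
Proof. move=> xX; have [c [h _]] := chi_ex X; exact: leq_ltn_trans (h x xX). Qed.

Lemma chi_mono (X Y : {set T}) : Y \subset X -> chi e Y <= chi e X.
Proof.
move=> /subsetP sYX; have [c [h1 h2]] := chi_ex X.
apply: (@chi_le _ _ c) => [x xY|x y xY yY]; [exact: h1 (sYX _ xY)|exact: h2 (sYX _ xY) (sYX _ yY)].
Qed.

Lemma chi_U (X Y : {set T}) : chi e (X :|: Y) <= chi e X + chi e Y.
Proof.
have [c1 [h1 p1]] := chi_ex X; have [c2 [h2 p2]] := chi_ex Y.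
apply: (@chi_le _ _ (fun x => if x \in X then c1 x else chi e X + c2 x)).
  move=> x; rewrite inE; case xX: (x \in X) => /=.
    by move=> _; apply: leq_trans (h1 x xX) (leq_addr _ _).
  by move=> xY; rewrite ltn_add2l h2.
move=> x y; rewrite !inE => hx hy exy.
case: ifP => xX; case: ifP => yX.
- exact: p1.
- by apply/negP => /eqP h; have := h1 x xX; rewrite h ltnNge leq_addr.
- by apply/negP => /eqP h; have := h1 y yX; rewrite -h ltnNge leq_addr.
- rewrite eqn_add2l; apply: p2 => //; [by move: hx; rewrite xX | by move: hy; rewrite yX].
Qed.

Definition indep (S : {set T}) := [forall x in S, forall y in S, ~~ e x y].

Lemma chi_indep (S : {set T}) : indep S -> chi e S <= 1.
Proof.
move=> /forallP iS; apply: (@chi_le _ _ (fun _ => 0)) => // x y xS yS exy.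
by have := implyP (iS x) xS => /forallP /(_ y); rewrite yS exy.
Qed.

Definition om (X : {set T}) := \max_(S : {set T} | clique e S && (S \subset X)) #|S|.
Definition dg (X : {set T}) x := #|[set y in X | e x y]|.
Definition De (X : {set T}) := \max_(x in X) dg X x.

Lemma cliqueP (S : {set T}) :
  (forall x y, x \in S -> y \in S -> x != y -> e x y) -> clique e S.
Proof.
move=> h; apply/forallP => x; apply/implyP => xS; apply/forallP => y; apply/implyP => yS.
by apply/implyP; apply: h.
Qed.

Lemma om_ge (S X : {set T}) : clique e S -> S \subset X -> #|S| <= om X.
Proof. by move=> cS sX; apply: (@leq_bigmax_cond _ (fun S => clique e S && (S \subset X))); rewrite cS. Qed.

Lemma om_mono (X Y : {set T}) : X \subset Y -> om X <= om Y.
Proof.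
move=> sXY; apply/bigmax_leqP => S /andP[cS sSX]; apply: om_ge => //.
exact: subset_trans sSX sXY.
Qed.

Lemma om_pos (X : {set T}) x : x \in X -> 0 < om X.
Proof.
move=> xX; have : #|[set x]| <= om X.
  apply: om_ge; last by rewrite sub1set.
  by apply: cliqueP => y z; rewrite !inE => /eqP -> /eqP ->; rewrite eqxx.
by rewrite cards1.
Qed.

Lemma De_ge (X : {set T}) x : x \in X -> dg X x <= De X.
Proof. by move=> xX; apply: (@leq_bigmax_cond _ (fun x => x \in X)). Qed.

Lemma De_le (X : {set T}) d : (forall x, x \in X -> dg X x <= d) -> De X <= d.
Proof. by move=> h; apply/bigmax_leqP. Qed.

Lemma max_indep (X C : {set T}) : C \subset X -> indep C -> X != set0 ->
  exists I : {set T}, [/\ C \subset I, I \subset X, indep I, I != set0 &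
    forall y, y \in X -> y \notin I -> exists2 z, z \in I & e y z].
Proof.
move=> sCX iC nX.
pose P := fun I : {set T} => [&& C \subset I, I \subset X & indep I].
have PC : P C by rewrite /P subxx sCX iC.
case: (arg_maxnP (fun I : {set T} => #|I|) PC) => I PI mx.
move: (PI); rewrite /P => /and3P[sCI sIX iI].
have hmax : forall y, y \in X -> y \notin I -> exists2 z, z \in I & e y z.
  move=> y yX yI; case: (boolP [exists z in I, e y z]) => [/exists_inP//|/exists_inPn hn].
  exfalso.
  have : P (y |: I).
    rewrite /P (subset_trans sCI (subsetUr _ _)) subUset sub1set yX sIX /=.
    apply/forallP => a; apply/implyP; rewrite !inE => /orP[/eqP-> | aI];
      apply/forallP => b; apply/implyP; rewrite !inE => /orP[/eqP-> | bI].
    - by rewrite eirr.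
    - exact: hn.
    - by rewrite esym hn.
    - by have := implyP (forallP iI a) aI => /forallP /(_ b); rewrite bI.
  move=> /mx; rewrite cardsU1 yI /=; lia.
exists I; split => //.
case: (set_0Vmem X) => [X0|[x xX]]; first by rewrite X0 eqxx in nX.
apply/set0Pn; case xI: (x \in I); first by exists x.
by have [z zI _] := hmax x xX (negbT xI); exists z.
Qed.

Lemma De_drop (X I : {set T}) :
  (forall y, y \in X -> y \notin I -> exists2 z, z \in I & e y z) -> I \subset X ->
  X :\: I != set0 -> De (X :\: I) < De X.
Proof.
move=> hmax sIX /set0Pn[y0 y0X'].
have key : forall y, y \in X :\: I -> dg (X :\: I) y < dg X y.
  move=> y; rewrite inE => /andP[yI yX]; have [z zI eyz] := hmax y yX yI.
  apply: proper_card; apply/properP; split.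
    by apply/subsetP => w; rewrite !inE => /andP[/andP[_ ->] ->].
  exists z; first by rewrite inE eyz (subsetP sIX _ zI).
  by rewrite !inE zI.
have := key y0 y0X'; move: y0X'; rewrite inE => /andP[_ y0X] h.
have h2 := De_ge y0X.
have : De (X :\: I) <= (De X).-1.
  apply: De_le => y yX'; have := key y yX'; move: yX'; rewrite inE => /andP[_ yX].
  have := De_ge yX; lia.
lia.
Qed.

Lemma LHstep (X C : {set T}) : C \subset X -> indep C -> X != set0 ->
  exists I : {set T}, [/\ C \subset I, I \subset X, indep I,
    chi e X <= chi e (X :\: I) + 1 &
    [/\ #|X| = #|X :\: I| + #|I|, om (X :\: I) <= om X, #|X :\: I| < #|X| &
       (X :\: I != set0 -> De (X :\: I) < De X)]].
Proof.
move=> sCX iC nX; have [I [sCI sIX iI nI hmax]] := max_indep sCX iC nX.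
exists I; split => //.
- have eX : X = (X :\: I) :|: I.
    apply/setP => x; rewrite !inE; case xI: (x \in I); rewrite /= ?orbF ?orbT ?andbT //.
    by rewrite (subsetP sIX _ xI).
  rewrite {1}eX; apply: leq_trans (chi_U _ _) _; rewrite leq_add2l; exact: chi_indep.
- split.
  + by rewrite cardsDS // subnK // subset_leq_card.
  + exact/om_mono/subsetDl.
  + rewrite cardsDS //; have /set0Pn[z zI] := nI.
    have : 0 < #|I| by apply/card_gt0P; exists z.
    have : #|I| <= #|X| by apply: subset_leq_card.
    lia.
  + exact: De_drop.
Qed.

Definition no3 (X : {set T}) := forall x y z, x \in X -> y \in X -> z \in X ->
  x != y -> y != z -> x != z -> ~~ e x y -> ~~ e y z -> ~~ e x z -> False.

Lemma cardsU_disj (A B : {set T}) : (forall x, x \in A -> x \notin B) ->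
  #|A :|: B| = #|A| + #|B|.
Proof.
move=> h; rewrite cardsU (_ : A :&: B = set0) ?cards0 ?subn0 //.
by apply/setP => x; rewrite !inE; apply/negP => /andP[xA xB]; have := h x xA; rewrite xB.
Qed.

Lemma cardU_le (A B : {set T}) : #|A :|: B| <= #|A| + #|B|.
Proof. rewrite cardsU; lia. Qed.

Lemma L2 (X : {set T}) : X != set0 -> no3 X ->
  4 * chi e X <= 2 * om X + #|X| + De X + 1.
Proof.
move=> nX h3.
have [x0 x0X] : exists x, x \in X by apply/set0Pn.
set k := chi e X.
have kpos : 0 < k := chi_pos x0X.
have [c0 [hc0 pc0]] := chi_ex X.
pose c := fun x => (inord (c0 x) : 'I_k.+1).
have vc : forall x, x \in X -> nat_of_ord (c x) = c0 x.
  move=> x xX; rewrite /c inordK //; exact: ltnW (hc0 x xX).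
have pc : forall x y, x \in X -> y \in X -> e x y -> c x != c y.
  move=> x y xX yX exy; apply/negP => /eqP h.
  by have := pc0 x y xX yX exy; rewrite -(vc x xX) -(vc y yX) h eqxx.
have sameN : forall x y, x \in X -> y \in X -> c x = c y -> ~~ e x y.
  by move=> x y xX yX h; apply/negP => exy; have := pc x y xX yX exy; rewrite h eqxx.
have RC : forall c' : T -> 'I_k.+1,
    (forall x y, x \in X -> y \in X -> e x y -> c' x != c' y) ->
    (forall x, x \in X -> c' x \in [set c x | x in X]) ->
    forall i, i \in [set c x | x in X] -> (forall x, x \in X -> c' x != i) -> False.
  move=> c' pc' himg i hi hav.
  have h1 : k <= #|[set c' x | x in X]| by apply: chi_img.
  have h2 : [set c' x | x in X] \subset [set c x | x in X] :\ i.
    apply/subsetP => j /imsetP[x xX ->]; rewrite !inE hav //=; exact: himg.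
  have h3' : #|[set c x | x in X]| <= k.
    apply: leq_trans (_ : #|[set~ (ord_max : 'I_k.+1)]| <= _); last by rewrite cardsC1 card_ord.
    apply: subset_leq_card; apply/subsetP => j /imsetP[x xX ->]; rewrite !inE.
    apply/negP => /eqP /(congr1 val) /=; rewrite vc // => h; have := hc0 x xX; by rewrite h ltnn.
  have h4 := cardsD1 i [set c x | x in X]; rewrite hi in h4.
  have := subset_leq_card h2; lia.
have trip : forall x y z, x \in X -> y \in X -> z \in X -> x != y -> y != z -> x != z ->
    ~~ e x y -> ~~ e y z -> ~~ e x z -> False := h3.
pose U := [set x in X | [forall y in X, (c y == c x) ==> (y == x)]].
pose W := X :\: U.
have sUX : U \subset X by apply/subsetP => x; rewrite inE => /andP[].
have uU : forall u y, u \in U -> y \in X -> c y = c u -> y = u.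
  move=> u y; rewrite inE => /andP[_ /forallP hu] yX hy.
  by have := implyP (hu y) yX; rewrite hy eqxx => /eqP.
have WP : forall x, x \in W -> exists2 y, y \in X & (c y == c x) && (y != x).
  move=> x; rewrite !inE => /andP[/negP hn xX].
  case: (boolP [exists y in X, (c y == c x) && (y != x)]) => [/exists_inP//|/exists_inPn hy].
  exfalso; apply: hn; rewrite xX /=; apply/forallP => y; apply/implyP => yX; apply/implyP => cy.
  by have := hy y yX; rewrite cy /= negbK.
pose p := fun x => odflt x [pick y in X | (c y == c x) && (y != x)].
have pS : forall x, x \in W -> [/\ p x \in X, c (p x) = c x & p x != x].
  move=> x xW; rewrite /p; case: pickP => [y /andP[yX /andP[/eqP -> ->]] //|hn].
  by have [y yX hy] := WP x xW; have := hn y; rewrite yX hy.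
have WX : forall x, x \in W -> x \in X by move=> x; rewrite inE => /andP[].
have pU : forall x y z, x \in X -> y \in X -> z \in X -> c y = c x -> c z = c x ->
    y != x -> z != x -> y = z.
  move=> x y z xX yX zX cy cz yx zx; case: (y =P z) => // /eqP yz; exfalso.
  apply: (trip x y z xX yX zX _ yz _ (sameN x y xX yX (sym_eq cy))
     (sameN y z yX zX (etrans cy (sym_eq cz))) (sameN x z xX zX (sym_eq cz))).
    by rewrite eq_sym.
  by rewrite eq_sym.
have pW : forall x, x \in W -> p x \in W.
  move=> x xW; have [pX cp px] := pS x xW; rewrite inE pX andbT.
  apply/negP => hpU; have := uU _ _ hpU (WX x xW) (sym_eq cp).
  by move=> h; move: px; rewrite -h eqxx.
have eXUW : X = U :|: W.
  apply/setP => x; rewrite in_setU in_setD; case xU: (x \in U); rewrite /= ?andbT //.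
  by rewrite (subsetP sUX _ xU).
have cX : #|X| = #|U| + #|W| by rewrite /W cardsDS // subnKC // subset_leq_card.
have cU : k <= #|U| + #|[set c x | x in W]|.
  have hk1 : k <= #|[set c x | x in X]| by apply: chi_img.
  apply: leq_trans hk1 _; rewrite {1}eXUW imsetU.
  rewrite cardsU; apply: leq_trans (leq_subr _ _) _; rewrite leq_add2r; exact: leq_imset_card.
have cW : 2 * #|[set c x | x in W]| <= #|W|.
  have -> : #|W| = \sum_(x in W) 1 by rewrite sum1_card.
  rewrite (partition_big_imset c) /= mulnC -sum_nat_const.
  apply: leq_sum => j /imsetP[x xW ->].
  rewrite (eq_bigl (fun z => z \in [set z0 in W | c z0 == c x])); last by move=> z; rewrite inE.
  rewrite sum1_card; have [pX cp px] := pS x xW.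
  apply: leq_trans (_ : #|[set x; p x]| <= _); first by rewrite cards2 eq_sym px.
  apply: subset_leq_card; apply/subsetP => y; rewrite in_set2 => /orP[] /eqP ->; rewrite inE.
    by rewrite xW eqxx.
  by rewrite pW // cp eqxx.
pose ND := fun v => [set y in X | (y != v) && ~~ e v y].
have NDsub : forall v, ND v \subset X by move=> v; apply/subsetP => y; rewrite inE => /andP[].
have NDcl : forall v, v \in X -> clique e (ND v).
  move=> v vX; apply: cliqueP => y1 y2; rewrite !inE => /and3P[y1X y1v ey1] /and3P[y2X y2v ey2] n12.
  apply/negPn/negP => h.
  by apply: (trip v y1 y2 vX y1X y2X _ n12 _ ey1 h ey2); rewrite eq_sym.
have NDom : forall v, v \in X -> #|ND v| <= om X by move=> v vX; apply: om_ge (NDcl v vX) (NDsub v).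
have cXv : forall v, v \in X -> #|X| <= 1 + De X + #|ND v|.
  move=> v vX.
  have : X \subset [set v] :|: ([set y in X | e v y] :|: ND v).
    apply/subsetP => y yX; rewrite !inE yX /=; case: (y =P v) => //= _.
    by case: (e v y).
  move/subset_leq_card; rewrite cardsU cards1 cardsU.
  have := De_ge vX; rewrite /dg; lia.
have [m hm] : exists m, m = #|[set c x | x in W]| by exists #|[set c x | x in W]|.
rewrite -hm in cU cW.
case: (set_0Vmem U) => [U0 | [u uU']].
  have := cXv x0 x0X; have := NDom x0 x0X; rewrite U0 cards0 in cU cX; lia.
have key : 2 * #|U| + #|ND u| <= 2 * om X.
  have uX := subsetP sUX _ uU'.
  have UX : forall x, x \in U -> x \in X by move=> x /(subsetP sUX).
  have R1 : forall u1 u2, u1 \in U -> u2 \in U -> u1 != u2 -> e u1 u2.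
    move=> u1 u2 h1 h2 n12; apply/negPn/negP => ne.
    pose c' := fun x => if x == u2 then c u1 else c x.
    apply: (RC c' _ _ (c u2)).
    - move=> x y xX yX exy; rewrite /c'.
      case: ifP => [/eqP ex | _]; case: ifP => [/eqP ey | _].
      + by move: exy; rewrite ex ey eirr.
      + apply/eqP => h; have hy := uU u1 y h1 yX (sym_eq h).
        by move: exy; rewrite ex hy esym (negbTE ne).
      + apply/eqP => h; have hx := uU u1 x h1 xX h.
        by move: exy; rewrite ey hx (negbTE ne).
      + exact: pc.
    - by move=> x xX; rewrite /c'; case: ifP => _; apply/imsetP; [exists u1; rewrite ?UX | exists x].
    - by apply/imsetP; exists u2; rewrite ?UX.
    - move=> x xX; rewrite /c'; case: ifP => [/eqP ex | /negbT nx]; apply/eqP => h.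
      + by move: n12; rewrite (uU u2 u1 h2 (UX _ h1) h) eqxx.
      + by move: nx; rewrite (uU u2 x h2 xX h) eqxx.
  pose S := ND u.
  have Sin : forall s, s \in S -> [/\ s \in X, s != u & ~~ e u s].
    by move=> s; rewrite inE => /and3P[].
  have SW : forall s, s \in S -> s \in W.
    move=> s /Sin[sX su eus]; rewrite inE sX andbT; apply/negP => sU.
    by move: eus; rewrite R1 // eq_sym.
  have cUW : forall v w, v \in U -> w \in W -> c w != c v.
    move=> v w vU wW; apply/eqP => h; have := uU v w vU (WX w wW) h => wv.
    by move: wW; rewrite inE wv vU.
  have cUU : forall v w, v \in U -> w \in U -> v != w -> c v != c w.
    by move=> v w vU wU vw; apply/eqP => h; move: vw; rewrite (uU w v wU (UX v vU) h) eqxx.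
  have R2 : forall s u2, s \in S -> u2 \in U -> e (p s) u2.
    move=> s u2 sS u2U; have [sX su eus] := Sin s sS; have sW := SW s sS.
    have [tX ct ts] := pS s sW; have tW := pW s sW.
    apply/negPn/negP => ne.
    case: (u2 =P u) => [e2 | n2].
      apply: (trip u s (p s) uX sX tX _ _ _ eus (sameN s (p s) sX tX (sym_eq ct)) _).
      - by rewrite eq_sym.
      - by rewrite eq_sym.
      - by apply/eqP => h; move: tW; rewrite -h inE uU'.
      - by rewrite esym -e2.
    pose c' := fun x => if x == s then c u else if x == p s then c u2 else c x.
    have c's : c' s = c u by rewrite /c' eqxx.
    have c't : c' (p s) = c u2 by rewrite /c' (negbTE ts) eqxx.
    have c'o : forall x, x != s -> x != p s -> c' x = c x.
      by move=> x h1 h2; rewrite /c' (negbTE h1) (negbTE h2).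
    have Hs : forall y, y \in X -> e s y -> c u != c' y.
      move=> y yX esy; case: (y =P s) => [ys | /eqP ys]; first by move: esy; rewrite ys eirr.
      case: (y =P p s) => [yt | /eqP yt]; first by rewrite yt c't cUU // eq_sym; apply/eqP.
      rewrite c'o //; apply/eqP => h; have := uU u y uU' yX (sym_eq h) => yu.
      by move: esy; rewrite yu esym (negbTE eus).
    have Ht : forall y, y \in X -> e (p s) y -> c u2 != c' y.
      move=> y yX ety; case: (y =P s) => [ys | /eqP ys].
        by rewrite ys c's cUU //; apply/eqP.
      case: (y =P p s) => [yt | /eqP yt]; first by move: ety; rewrite yt eirr.
      rewrite c'o //; apply/eqP => h; have := uU u2 y u2U yX (sym_eq h) => yu.
      by move: ety; rewrite yu (negbTE ne).
    apply: (RC c' _ _ (c s)).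
    - move=> x y xX yX exy.
      case: (x =P s) => [xs | /eqP xs]; first by rewrite xs c's; apply: Hs => //; rewrite -xs.
      case: (x =P p s) => [xt | /eqP xt]; first by rewrite xt c't; apply: Ht => //; rewrite -xt.
      rewrite (c'o x xs xt).
      case: (y =P s) => [ys | /eqP ys].
        by rewrite ys c's eq_sym -(c'o x xs xt); apply: Hs => //; rewrite -ys esym.
      case: (y =P p s) => [yt | /eqP yt].
        by rewrite yt c't eq_sym -(c'o x xs xt); apply: Ht => //; rewrite -yt esym.
      by rewrite (c'o y ys yt); apply: pc.
    - move=> x xX; rewrite /c'; case: ifP => _; first by apply/imsetP; exists u.
      by case: ifP => _; apply/imsetP; [exists u2; rewrite ?UX | exists x].
    - by apply/imsetP; exists s.
    - move=> x xX; case: (x =P s) => [-> | /eqP xs].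
        by rewrite c's; apply/eqP => h; move: su; rewrite (uU u s uU' sX (sym_eq h)) eqxx.
      case: (x =P p s) => [-> | /eqP xt].
        by rewrite c't eq_sym cUW.
      rewrite (c'o x xs xt); apply/eqP => h.
      by move: xt; rewrite (pU s x (p s) sX xX tX h ct xs ts) eqxx.
  have Sdc : forall s1 s2, s1 \in S -> s2 \in S -> s1 != s2 -> c s1 != c s2.
    move=> s1 s2 h1 h2 n12; have [s1X s1u eus1] := Sin s1 h1; have [s2X s2u eus2] := Sin s2 h2.
    apply/eqP => h; apply: (trip u s1 s2 uX s1X s2X _ n12 _ eus1 (sameN s1 s2 s1X s2X h) eus2).
      by rewrite eq_sym.
    by rewrite eq_sym.
  have R3 : forall s1 s2 u', s1 \in S -> s2 \in S -> s1 != s2 -> u' \in U -> u' != u ->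
      ~~ e s1 u' -> e (p s1) (p s2).
    move=> s1 s2 u' h1 h2 n12 u'U u'u ne1.
    have [s1X s1u eus1] := Sin s1 h1; have [s2X s2u eus2] := Sin s2 h2.
    have s1W := SW s1 h1; have s2W := SW s2 h2.
    have [t1X ct1 t1s] := pS s1 s1W; have [t2X ct2 t2s] := pS s2 s2W.
    have c12 := Sdc s1 s2 h1 h2 n12.
    have t1s2 : p s1 != s2 by apply/eqP => h; move: c12; rewrite -h ct1 eqxx.
    apply/negPn/negP => ne.
    pose c' := fun x => if x == s1 then c u' else if x == p s1 then c s2
                        else if x == s2 then c u else c x.
    have c's1 : c' s1 = c u' by rewrite /c' eqxx.
    have c't1 : c' (p s1) = c s2 by rewrite /c' (negbTE t1s) eqxx.
    have c's2 : c' s2 = c u by rewrite /c' eq_sym (negbTE n12) eq_sym (negbTE t1s2) eqxx.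
    have c'o : forall x, x != s1 -> x != p s1 -> x != s2 -> c' x = c x.
      by move=> x a1 a2 a3; rewrite /c' (negbTE a1) (negbTE a2) (negbTE a3).
    have d1 : c u' != c s2 by rewrite eq_sym cUW.
    have d2 : c u' != c u by rewrite cUU.
    have d3 : c s2 != c u by rewrite cUW.
    have Hs1 : forall y, y \in X -> e s1 y -> c u' != c' y.
      move=> y yX ey; case: (y =P s1) => [ys | /eqP a1]; first by move: ey; rewrite ys eirr.
      case: (y =P p s1) => [yt | /eqP a2]; first by rewrite yt c't1.
      case: (y =P s2) => [ys | /eqP a3]; first by rewrite ys c's2.
      rewrite c'o //; apply/eqP => h; have := uU u' y u'U yX (sym_eq h) => yu.
      by move: ey; rewrite yu (negbTE ne1).
    have Ht1 : forall y, y \in X -> e (p s1) y -> c s2 != c' y.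
      move=> y yX ey; case: (y =P s1) => [ys | /eqP a1]; first by rewrite ys c's1 eq_sym.
      case: (y =P p s1) => [yt | /eqP a2]; first by move: ey; rewrite yt eirr.
      case: (y =P s2) => [ys | /eqP a3]; first by rewrite ys c's2.
      rewrite c'o //; apply/eqP => h.
      have := pU s2 y (p s2) s2X yX t2X (sym_eq h) ct2 a3 t2s => yt.
      by move: ey; rewrite yt (negbTE ne).
    have Hs2 : forall y, y \in X -> e s2 y -> c u != c' y.
      move=> y yX ey; case: (y =P s1) => [ys | /eqP a1]; first by rewrite ys c's1 eq_sym.
      case: (y =P p s1) => [yt | /eqP a2]; first by rewrite yt c't1 eq_sym.
      case: (y =P s2) => [ys | /eqP a3]; first by move: ey; rewrite ys eirr.
      rewrite c'o //; apply/eqP => h; have := uU u y uU' yX (sym_eq h) => yu.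
      by move: ey; rewrite yu esym (negbTE eus2).
    apply: (RC c' _ _ (c s1)).
    - move=> x y xX yX exy.
      case: (x =P s1) => [xs | /eqP a1]; first by rewrite xs c's1; apply: Hs1 => //; rewrite -xs.
      case: (x =P p s1) => [xs | /eqP a2]; first by rewrite xs c't1; apply: Ht1 => //; rewrite -xs.
      case: (x =P s2) => [xs | /eqP a3]; first by rewrite xs c's2; apply: Hs2 => //; rewrite -xs.
      rewrite (c'o x a1 a2 a3).
      case: (y =P s1) => [ys | /eqP b1].
        by rewrite ys c's1 eq_sym -(c'o x a1 a2 a3); apply: Hs1 => //; rewrite -ys esym.
      case: (y =P p s1) => [ys | /eqP b2].
        by rewrite ys c't1 eq_sym -(c'o x a1 a2 a3); apply: Ht1 => //; rewrite -ys esym.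
      case: (y =P s2) => [ys | /eqP b3].
        by rewrite ys c's2 eq_sym -(c'o x a1 a2 a3); apply: Hs2 => //; rewrite -ys esym.
      by rewrite (c'o y b1 b2 b3); apply: pc.
    - move=> x xX; rewrite /c'; case: ifP => _; first by apply/imsetP; exists u'; rewrite ?UX.
      case: ifP => _; first by apply/imsetP; exists s2.
      by case: ifP => _; apply/imsetP; [exists u | exists x].
    - by apply/imsetP; exists s1.
    - move=> x xX; case: (x =P s1) => [-> | /eqP a1]; first by rewrite c's1 eq_sym cUW.
      case: (x =P p s1) => [-> | /eqP a2]; first by rewrite c't1 eq_sym.
      case: (x =P s2) => [-> | /eqP a3]; first by rewrite c's2 eq_sym cUW.
      rewrite (c'o x a1 a2 a3); apply/eqP => h.
      by move: a2; rewrite (pU s1 x (p s1) s1X xX t1X h ct1 a1 t1s) eqxx.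
  pose Snp := [set s in S | [exists u2 in U, (u2 != u) && ~~ e s u2]].
  pose Sp := S :\: Snp.
  have SnpS : forall s, s \in Snp -> s \in S by move=> s; rewrite inE => /andP[].
  have SpS : forall s, s \in Sp -> s \in S by move=> s; rewrite in_setD => /andP[].
  have pinj : {in S &, injective p}.
    move=> s1 s2 h1 h2 hp; apply/eqP; apply/negPn/negP => n12.
    have [_ c1 _] := pS s1 (SW s1 h1); have [_ c2 _] := pS s2 (SW s2 h2).
    by move: (Sdc s1 s2 h1 h2 n12); rewrite -c1 -c2 hp eqxx.
  have J5c : forall Z : {set T}, Z \subset Sp -> #|Z| <= 1 -> #|U| + #|Snp| + #|Z| <= om X.
    move=> Z sZ cZ.
    have ZS : forall s, s \in Z -> s \in S by move=> s /(subsetP sZ) /SpS.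
    have NZ : forall s, s \in Snp :|: Z -> s \in S by move=> s; rewrite in_setU => /orP[/SnpS|/ZS].
    have dZ : forall s, s \in Snp -> s \notin Z.
      move=> s sn; apply/negP => /(subsetP sZ); rewrite in_setD sn.
      by [].
    have -> : #|U| + #|Snp| + #|Z| = #|U :|: [set p s | s in Snp :|: Z]|.
      rewrite cardsU_disj; last first.
        move=> x xU; apply/negP => /imsetP[s sN xe]; have := pW s (SW s (NZ s sN)).
        by rewrite inE -xe xU.
      rewrite card_in_imset; last by move=> s1 s2 h1 h2; apply: pinj; apply: NZ.
      by rewrite cardsU_disj // addnA.
    apply: om_ge.
      apply: cliqueP => x y; rewrite in_setU => hx; rewrite in_setU => hy.
      case/orP: hx => [xU | /imsetP[s1 h1 ->]]; case/orP: hy => [yU | /imsetP[s2 h2 ->]] => nxy.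
      - exact: R1.
      - by rewrite esym; apply: R2 => //; apply: NZ.
      - by apply: R2 => //; apply: NZ.
      - have n12 : s1 != s2 by apply/eqP => h; move: nxy; rewrite h eqxx.
        move: (h1) (h2); rewrite !in_setU => /orP[s1n | s1Z] /orP[s2n | s2Z].
        + move: s1n; rewrite inE => /andP[s1S /exists_inP[u2 u2U /andP[u2u ne]]].
          exact: (R3 s1 s2 u2 s1S (NZ s2 h2) n12 u2U u2u ne).
        + move: s1n; rewrite inE => /andP[s1S /exists_inP[u2 u2U /andP[u2u ne]]].
          exact: (R3 s1 s2 u2 s1S (NZ s2 h2) n12 u2U u2u ne).
        + move: s2n; rewrite inE => /andP[s2S /exists_inP[u2 u2U /andP[u2u ne]]].
          rewrite esym; apply: (R3 s2 s1 u2 s2S (NZ s1 h1) _ u2U u2u ne); by rewrite eq_sym.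
        + exfalso; have : #|[set s1; s2]| <= #|Z|.
            by apply: subset_leq_card; apply/subsetP => z; rewrite in_set2 => /orP[] /eqP ->.
          rewrite cards2 n12; lia.
    apply/subsetP => x; rewrite in_setU => /orP[/UX // | /imsetP[s sN ->]].
    by have [] := pS s (SW s (NZ s sN)).
  have J4c : #|U :\ u| + #|Sp| <= om X.
    rewrite -cardsU_disj; last first.
      by move=> x; rewrite in_setD1 => /andP[_ xU]; apply/negP => /SpS /SW; rewrite inE xU.
    apply: om_ge.
      apply: cliqueP => x y; rewrite !in_setU !in_setD1 => hx hy nxy.
      case/orP: hx => [/andP[xu xU] | xS]; case/orP: hy => [/andP[yu yU] | yS].
      - exact: R1.
      - have hy : y \notin Snp by move: (yS); rewrite in_setD => /andP[].
        move: hy; rewrite in_set negb_and (SpS y yS) /= => /exists_inPn /(_ x xU).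
        by rewrite xu /= negbK esym.
      - have hx : x \notin Snp by move: (xS); rewrite in_setD => /andP[].
        move: hx; rewrite in_set negb_and (SpS x xS) /= => /exists_inPn /(_ y yU).
        by rewrite yu /= negbK.
      - have := NDcl u uX; move=> /forallP /(_ x) /implyP /(_ (SpS x xS)).
        by move=> /forallP /(_ y) /implyP /(_ (SpS y yS)) /implyP; apply.
    apply/subsetP => x; rewrite in_setU in_setD1 => /orP[/andP[_ /UX] // | /SpS xS].
    by have [] := Sin x xS.
  have cS : #|S| = #|Snp| + #|Sp|.
    rewrite -(cardsID Snp S) (_ : S :&: Snp = Snp) //.
    by apply/setP => x; rewrite in_setI; case xN: (x \in Snp); rewrite ?andbF ?andbT // SnpS.
  have cU1 := cardsD1 u U; rewrite uU' in cU1.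
  case: (set_0Vmem Sp) => [Sp0 | [s0 s0Sp]].
    have := J5c set0 (sub0set _) ltac:(by rewrite cards0).
    rewrite cards0 Sp0 cards0 in cS *; rewrite -/S; lia.
  have := J5c [set s0] ltac:(by rewrite sub1set) ltac:(by rewrite cards1).
  rewrite cards1 -/S; lia.

have := cXv u (subsetP sUX _ uU'); lia.
Qed.



Lemma LH n (X H : {set T}) : #|X| <= n -> H \subset X ->
  4 * chi e X + #|H| <= 2 * om X + #|X| + De X + 1 + 3 * chi e H.
Proof.
elim: n X H => [|n IH] X H hX sHX.
  move: hX; rewrite leqn0 cards_eq0 => /eqP X0; subst X.
  have -> : H = set0 by apply/eqP; rewrite -subset0.
  by rewrite chi0 cards0.
case: (set_0Vmem X) => [X0|[x0 x0X]].
  subst X; have -> : H = set0 by apply/eqP; rewrite -subset0.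
  by rewrite chi0 cards0.
have nX : X != set0 by apply/set0Pn; exists x0.
have omX := om_pos x0X.
case: (set_0Vmem H) => [H0|[h0 h0H]].
  subst H; rewrite chi0 cards0.
  case: (boolP [exists C : {set T}, [&& C \subset X, indep C & 2 < #|C|]]) => [/existsP[C /and3P[sCX iC c3]]|hn].
    have [I [sCI sIX iI hchi [hc hom hlt hDe]]] := LHstep sCX iC nX.
    have hI : 2 < #|I| by apply: leq_trans c3 (subset_leq_card sCI).
    have := IH (X :\: I) set0 ltac:(lia) (sub0set _).
    rewrite chi0 cards0.
    case: (set_0Vmem (X :\: I)) => [X'0|[y yX']].
      rewrite X'0 chi0 in hchi; lia.
    have := hDe ltac:(apply/set0Pn; exists y).
    lia.
  suff: no3 X by move=> h3; have := L2 nX h3; lia.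
  move=> x y z xX yX zX nxy nyz nxz exy eyz exz.
  have c3 : 2 < #|x |: (y |: [set z])|.
    by rewrite !cardsU1 !inE cards1 negb_or nxy nxz nyz.
  have iC : indep (x |: (y |: [set z])).
    apply/forallP => a; apply/implyP; rewrite !inE => ha;
      apply/forallP => b; apply/implyP; rewrite !inE => hb.
    by case/or3P: ha => /eqP->; case/or3P: hb => /eqP->; rewrite ?eirr // esym.
  move/existsPn: hn => /(_ (x |: (y |: [set z]))).
  by rewrite iC c3 !subUset !sub1set xX yX zX.
have [c [hc pc]] := chi_ex H.
have hpos := chi_pos h0H.
pose C := [set x in H | c x == (chi e H).-1].
have sCX : C \subset X by apply: subset_trans sHX; apply/subsetP => x; rewrite inE => /andP[].
have iC : indep C.
  apply/forallP => a; apply/implyP; rewrite inE => /andP[aH /eqP ca];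
  apply/forallP => b; apply/implyP; rewrite inE => /andP[bH /eqP cb].
  by apply/negP => eab; have := pc a b aH bH eab; rewrite ca cb eqxx.
have hHC : chi e (H :\: C) <= (chi e H).-1.
  apply: (@chi_le _ _ c) => [x|x y]; rewrite !inE.
    move=> /andP[hn xH]; have := hc x xH; move: hn; rewrite xH /= => hn; lia.
  by move=> /andP[_ xH] /andP[_ yH]; apply: pc.
have [I [sCI sIX iI hchi [hcard hom hlt hDe]]] := LHstep sCX iC nX.
have sH' : H :\: I \subset X :\: I by apply: setSD.
have := IH (X :\: I) (H :\: I) ltac:(lia) sH'.
have hH'C : chi e (H :\: I) <= chi e (H :\: C) by apply: chi_mono; apply: setDS.
have hHI : #|H| <= #|H :\: I| + #|I|.
  rewrite -(cardsID I H) addnC leq_add2l; apply: subset_leq_card; exact: subsetIr.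
have hHX : #|H| <= #|X| by apply: subset_leq_card.
case: (set_0Vmem (X :\: I)) => [X'0|[y yX']].
  rewrite X'0 chi0 in hchi; lia.
have := hDe ltac:(apply/set0Pn; exists y).
lia.
Qed.

Lemma om_attain (X : {set T}) : exists S : {set T}, [/\ clique e S, S \subset X & om X = #|S|].
Proof.
pose P := fun S : {set T} => clique e S && (S \subset X).
have P0 : P set0 by rewrite /P sub0set andbT; apply: cliqueP => x y; rewrite inE.
case: (arg_maxnP (fun S : {set T} => #|S|) P0) => S PS mx.
move: (PS); rewrite /P => /andP[cS sSX]; exists S; split => //.
apply/eqP; rewrite eqn_leq om_ge // andbT; apply/bigmax_leqP => S' PS'; exact: mx.
Qed.

Lemma De_attain (X : {set T}) x0 : x0 \in X -> exists2 x, x \in X & De X = dg X x.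
Proof.
move=> x0X; case: (arg_maxnP (dg X) x0X) => x xX mx; exists x => //.
apply/eqP; rewrite eqn_leq De_ge // andbT; apply: De_le => y yX; exact: mx.
Qed.

End Basic.

From mathcomp Require Import ring lra.
Import GRing.Theory Num.Theory.

Theorem nat_main (T : finType) (e : rel T) (K H : {set T}) :
  simple_graph e -> compl_cutset e K ->
  4 * chi e setT + #|H :\: K| <= 2 * omega e + 2 * Delta e + 2 + 4 * chi e K + 3 * chi e (H :\: K).
Proof.
case=> esym eirr _ [u [v [uK vK nc]]].
set r := fun x y => [&& x \notin K, y \notin K & compl_rel e x y] in nc.
pose A := [set x | (x \notin K) && connect r u x].
pose B := [set x | (x \notin K) && ~~ connect r u x].
have uA : u \in A by rewrite inE uK connect0.
have vB : v \in B by rewrite inE vK nc.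
have cAB : forall a b, a \in A -> b \in B -> e a b.
  move=> a b; rewrite !inE => /andP[aK ca] /andP[bK cb].
  apply/negPn/negP => nab; move/negP: (cb); apply.
  have hr : r a b.
    rewrite /r aK bK /compl_rel nab andbT.
    by apply/negP => /eqP ab; move: cb; rewrite -ab ca.
  exact: (connect_trans ca (connect1 hr)).
have dAB : forall x, x \in A -> x \notin B by move=> x; rewrite !inE => /andP[_ ->]; rewrite andbF.
have dKAB : forall x, x \in K -> x \notin A :|: B by move=> x xK; rewrite !inE xK.
have hchi : chi e setT <= chi e K + chi e A + chi e B.
  have -> : [set: T] = K :|: (A :|: B).
    apply/setP => x; rewrite !inE; by case: (x \in K); case: (connect r u x).
  apply: leq_trans (chi_U eirr _ _) _; rewrite -addnA leq_add2l; exact: chi_U.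
have homega : om e A + om e B <= omega e.
  have [SA [cA sA ->]] := om_attain e A; have [SB [cB sB ->]] := om_attain e B.
  rewrite -cardsU_disj; last by move=> x /(subsetP sA) xA; by apply/negP => /(subsetP sB) xB; have := dAB x xA; rewrite xB.
  apply: (@leq_bigmax_cond _ (fun S => clique e S)).
  apply: cliqueP => x y; rewrite !inE => hx hy nxy.
  case/orP: hx => hx; case/orP: hy => hy.
  - by have := implyP (forallP (implyP (forallP cA x) hx) y) hy; rewrite nxy.
  - exact: cAB (subsetP sA _ hx) (subsetP sB _ hy).
  - by rewrite esym; exact: cAB (subsetP sA _ hy) (subsetP sB _ hx).
  - by have := implyP (forallP (implyP (forallP cB x) hx) y) hy; rewrite nxy.
have hDA : #|B| + De e A <= Delta e.
  have [x xA ->] := De_attain e uA.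
  apply: leq_trans (@leq_bigmax_cond _ xpredT (fun x => #|[set y | e x y]|) x isT).
  rewrite /dg -cardsU_disj; last first.
    by move=> y yB; rewrite inE; apply/negP => /andP[yA _]; have := dAB y yA; rewrite yB.
  apply: subset_leq_card; apply/subsetP => y; rewrite in_setU => /orP[yB|].
    by rewrite inE; exact: cAB.
  by rewrite !inE => /andP[_ ->].
have hDB : #|A| + De e B <= Delta e.
  have [x xB ->] := De_attain e vB.
  apply: leq_trans (@leq_bigmax_cond _ xpredT (fun x => #|[set y | e x y]|) x isT).
  rewrite /dg -cardsU_disj; last first.
    by move=> y yA; rewrite inE; apply/negP => /andP[yB _]; have := dAB y yA; rewrite yB.
  apply: subset_leq_card; apply/subsetP => y; rewrite in_setU => /orP[yA|].
    by rewrite inE esym; exact: cAB.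
  by rewrite !inE => /andP[_ ->].
pose H' := H :\: K; pose HA := H' :&: A; pose HB := H' :&: B.
have eH : H' = HA :|: HB.
  apply/setP => x; rewrite !inE; case: (x \in K); rewrite ?andbF //=.
  by case: (x \in H); case: (connect r u x).
have cardH : #|H'| = #|HA| + #|HB|.
  rewrite eH cardsU_disj // => x; rewrite in_setI => /andP[_ xA]; apply/negP; rewrite in_setI => /andP[_ xB].
  by have := dAB x xA; rewrite xB.
have chiH : chi e HA + chi e HB <= chi e H'.
  have [c [hc pc]] := chi_ex eirr H'.
  pose c' := fun x => (inord (c x) : 'I_(chi e H').+1).
  have vc : forall x, x \in H' -> nat_of_ord (c' x) = c x.
    move=> x xH; rewrite /c' inordK //; exact: ltnW (hc x xH).
  have pc' : forall x y, x \in H' -> y \in H' -> e x y -> c' x != c' y.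
    move=> x y xH yH exy; apply/negP => /eqP h.
    by have := pc x y xH yH exy; rewrite -(vc x xH) -(vc y yH) h eqxx.
  have sA : HA \subset H' by apply: subsetIl.
  have sB : HB \subset H' by apply: subsetIl.
  have h1 : chi e HA <= #|[set c' x | x in HA]|.
    by apply: chi_img => x y xA yA; apply: pc'; apply: (subsetP sA).
  have h2 : chi e HB <= #|[set c' x | x in HB]|.
    by apply: chi_img => x y xA yA; apply: pc'; apply: (subsetP sB).
  apply: leq_trans (leq_add h1 h2) _.
  rewrite -cardsU_disj; last first.
    move=> i /imsetP[a aA ->]; apply/negP => /imsetP[b bB hab].
    have := pc' a b (subsetP sA _ aA) (subsetP sB _ bB).
    rewrite hab eqxx; apply/implyP; apply: cAB.
      by move: aA; rewrite inE => /andP[].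
    by move: bB; rewrite inE => /andP[].
  apply: leq_trans (_ : #|[set~ (ord_max : 'I_(chi e H').+1)]| <= _); last by rewrite cardsC1 card_ord.
  apply: subset_leq_card; apply/subsetP => i; rewrite in_setU => /orP[] /imsetP[a aH ->];
    rewrite !inE; apply/negP => /eqP /(congr1 val) /=.
    by rewrite vc ?(subsetP sA _ aH) // => h; have := hc a (subsetP sA _ aH); rewrite h ltnn.
  by rewrite vc ?(subsetP sB _ aH) // => h; have := hc a (subsetP sB _ aH); rewrite h ltnn.
have LA := @LH _ _ esym eirr _ A HA (leqnn _) (subsetIr _ _).
have LB := @LH _ _ esym eirr _ B HB (leqnn _) (subsetIr _ _).
rewrite -/H' cardH.
lia.
Qed.

Unset Implicit Arguments.
Local Open Scope ring_scope.

Theorem proposition4 (T : finType) (e : rel T) (K H : {set T}) :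
  simple_graph e ->
  compl_cutset e K ->
  H != set0 ->
  ((chi e setT)%:R : rat) <=
    (1 / 2) * ((omega e)%:R + (Delta e)%:R + 1)
    + (4 * (chi e K)%:R + 3 * (chi e (H :\: K))%:R - (#|H :\: K|)%:R) / 4.
Proof.
move=> sg cs _; have h := @nat_main T e K H sg cs.
have h' : (((4 * chi e setT + #|H :\: K|)%N)%:R : rat) <=
  ((2 * omega e + 2 * Delta e + 2 + 4 * chi e K + 3 * chi e (H :\: K))%N)%:R.
  by rewrite ler_nat.
rewrite !natrD in h'.
lra.
Qed.
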